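(* Let $f\in\mathcal{C}(1)$ and let $\mathcal{J}=\{I_1,\dots,I_\ell\}$ be finitely many disjoint intervals. Then: (i) $f^{\mathrm{sd},\mathcal{J}}$ is constant on each $I\in\mathcal{J}$; (ii) for all $x,y\in\mathbb{R}$, $f^{\mathrm{sd},\mathcal{J}}(x)\ge f(x)-\sum_{I\in\mathcal{J}}\Delta_I(f)$ and $(f^{\mathrm{sd},\mathcal{J}}(x)-f^{\mathrm{sd},\mathcal{J}}(y))_+\le(f(x)-f(y))_+$. As a consequence, $E(f^{\mathrm{sd},\mathcal{J}})\le E(f)$.
   Context: For $x\in\mathbb{R}$, $\mathbb{P}^{\rm BM}_x$ is the law of one-dimensional Brownian motion $(B_t)$ started at $x$, and $\tau_y:=\inf\{t\ge0:B_t=y\}$. $\mathcal{C}(1)$ is the set of functions $f:\mathbb{R}\to[0,\infty)$ that are non-increasing on $(-\infty,0]$, non-decreasing on $[0,\infty)$, with $\lim_{x\to0}f(x)=0$, $\sup_{\mathbb{R}}f\le1$ and $\lim_{x\to\infty}f(x)=1$; $E(f):=-\int_{\mathbb{R}}\log\mathbb{P}^{\rm BM}_x(\tau_y\ge f(y)-f(x)\ \forall y\in\mathbb{R})\,\mathrm{d}x$. The intervals $I_i$ have endpoints $a_i<b_i$ (possibly $\pm\infty$), open, closed or half-open. For an interval $I$ and a function $g$, $M_I(g):=\sup_{y\in I}g(y)$, $m_I(g):=\inf_{y\in I}g(y)$, $\Delta_I(g):=M_I(g)-m_I(g)$. Soft deformation: $f^{[0]}:=f$ and for $k=1,\dots,\ell$,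 with $m_k:=m_{I_k}(f^{[k-1]})$, $M_k:=M_{I_k}(f^{[k-1]})$, set $f^{[k]}(x):=m_k$ if $f^{[k-1]}(x)\in[m_k,M_k]$, $f^{[k]}(x):=f^{[k-1]}(x)$ if $f^{[k-1]}(x)<m_k$, and $f^{[k]}(x):=f^{[k-1]}(x)-\Delta_{I_k}(f^{[k-1]})$ if $f^{[k-1]}(x)>M_k$. Then $f^{\mathrm{sd},\mathcal{J}}:=f^{[\ell]}$. *)

(* Defs.v *)
From HB Require Import structures.
From mathcomp Require Import all_boot all_order all_algebra.
From mathcomp Require Import all_classical all_reals all_analysis.
Set Implicit Arguments. Unset Strict Implicit. Unset Printing Implicit Defensive.
Import Order.TTheory GRing.Theory Num.Theory.
Import numFieldNormedType.Exports.
Local Open Scope classical_set_scope.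
Local Open Scope ring_scope.

Section Defs.
Variable R : realType.

Definition inC1 (f : R -> R) : Prop :=
  [/\ (forall x, 0 <= f x),
      (forall x y, x <= y -> y <= 0 -> f y <= f x),
      (forall x y, 0 <= x -> x <= y -> f x <= f y),
      (f x @[x --> (0 : R)^'] --> (0 : R)) &
      ((forall x, f x <= 1) /\ (f x @[x --> +oo] --> (1 : R)))].

(* An interval with endpoints a < b: it contains two distinct points. *)
Definition itv_nondeg (I : interval R) : Prop :=
  exists x y, [/\ x \in I, y \in I & x < y].

Definition supI (I : interval R) (g : R -> R) : R := sup [set g y | y in [set` I]].
Definition infI (I : interval R) (g : R -> R) : R := inf [set g y | y in [set` I]].
Definition DeltaI (I : interval R) (g : R -> R) : R := supI I g - infI I g.

Definition sd_step (g : R -> R) (I : interval R) : R -> R :=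
  fun x => let m := infI I g in let M := supI I g in
    if g x < m then g x
    else if g x <= M then m
    else g x - DeltaI I g.

Definition soft_deform (f : R -> R) (J : seq (interval R)) : R -> R :=
  foldl sd_step f J.

Definition pos_part (t : R) : R := Num.max t 0.

Definition is_std_BM d (T : measurableType d) (P : probability T R)
    (W : R -> T -> R) : Prop :=
  [/\ (forall t, measurable_fun [set: T] (W t)),
      (forall w, W 0 w = 0),
      (forall w, {within `[0, +oo[, continuous (fun t => W t w)}),
      (forall s t, 0 <= s -> s < t -> forall A : set R, measurable A ->
         P [set w | A (W t w - W s w)] = normal_prob 0 (Num.sqrt (t - s)) A) &
      (forall (n : nat) (ts : 'I_n.+1 -> R), 0 <= ts ord0 ->
         (forall i : 'I_n, ts (widen_ord (leqnSn n) i) < ts (lift ord0 i)) ->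
         forall A : 'I_n -> set R, (forall i, measurable (A i)) ->
         P [set w | forall i : 'I_n,
                      A i (W (ts (lift ord0 i)) w - W (ts (widen_ord (leqnSn n) i)) w)]
         = (\prod_(i < n)
              P [set w | A i (W (ts (lift ord0 i)) w - W (ts (widen_ord (leqnSn n) i)) w)%R])%E)].

(* Hitting time tau_y of the Brownian motion B_t = x + W_t started at x
   (inf of the empty set is +oo). *)
Definition hit_time d (T : measurableType d) (W : R -> T -> R) (x y : R) (w : T)
  : \bar R := ereal_inf [set t%:E | t in [set t | 0 <= t /\ x + W t w = y]].

Definition bm_event_prob d (T : measurableType d) (P : probability T R)
    (W : R -> T -> R) (g : R -> R) (x : R) : \bar R :=
  P [set w | forall y, ((g y - g x)%:E <= hit_time W x y w)%E].

Definition energy d (T : measurableType d) (P : probability T R)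
    (W : R -> T -> R) (g : R -> R) : \bar R :=
  (\int[lebesgue_measure]_(x in [set: R]) (- lne (bm_event_prob P W g x)))%E.

End Defs.

(* Main.v *)
Require Import Defs.
From HB Require Import structures.
From mathcomp Require Import all_boot all_order all_algebra.
From mathcomp Require Import all_classical all_reals all_analysis.
From mathcomp Require Import lra measurable_realfun.
Import Order.TTheory GRing.Theory Num.Theory.
Import numFieldNormedType.Exports.
Local Open Scope classical_set_scope.
Local Open Scope ring_scope.
Set Implicit Arguments. Unset Strict Implicit.
Section PartA.
Variable R : realType.
Implicit Types (g : R -> R) (I : interval R).

Definition bnd g := forall x, 0 <= g x /\ g x <= 1.

Lemma img_ne I g : itv_nondeg I -> [set g y | y in [set` I]] !=set0.
Proof. by case=> x [y [xI _ _]]; exists (g x); exists x. Qed.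

Lemma img_sup I g : bnd g -> itv_nondeg I -> has_sup [set g y | y in [set` I]].
Proof.
move=> bg nI; split; first exact: img_ne.
by exists 1 => _ [y _ <-]; case: (bg y).
Qed.

Lemma img_inf I g : bnd g -> itv_nondeg I -> has_inf [set g y | y in [set` I]].
Proof.
move=> bg nI; split; first exact: img_ne.
by exists 0 => _ [y _ <-]; case: (bg y).
Qed.

Lemma supI_ge I g y : bnd g -> itv_nondeg I -> y \in I -> g y <= supI I g.
Proof.
move=> bg nI yI; move: (sup_upper_bound (img_sup bg nI)) => /(_ (g y)); apply; by exists y.
Qed.

Lemma infI_le I g y : bnd g -> itv_nondeg I -> y \in I -> infI I g <= g y.
Proof.
move=> bg nI yI; move: (ge_inf (img_inf bg nI).2) => /(_ (g y)); apply; by exists y.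
Qed.

Lemma infI_ge0 I g : bnd g -> itv_nondeg I -> 0 <= infI I g.
Proof.
move=> bg nI; apply: lb_le_inf; first exact: img_ne.
by move=> _ [y _ <-]; case: (bg y).
Qed.

Lemma supI_le I g (c : R) : itv_nondeg I -> (forall y, y \in I -> g y <= c) -> supI I g <= c.
Proof.
move=> nI H; apply: ge_sup; first exact: img_ne.
by move=> _ [y yI <-]; apply: H.
Qed.

Lemma infI_ge I g (c : R) : itv_nondeg I -> (forall y, y \in I -> c <= g y) -> c <= infI I g.
Proof.
move=> nI H; apply: lb_le_inf; first exact: img_ne.
by move=> _ [y yI <-]; apply: H.
Qed.

Lemma infI_supI I g : bnd g -> itv_nondeg I -> infI I g <= supI I g.
Proof.
move=> bg nI; case: (nI) => x [y [xI _ _]].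
exact: le_trans (infI_le bg nI xI) (supI_ge bg nI xI).
Qed.

Definition Phi (m M v : R) := if v < m then v else if v <= M then m else v - (M - m).

Lemma sd_stepE g I x : sd_step g I x = Phi (infI I g) (supI I g) (g x).
Proof. by []. Qed.

Lemma pos_le (a b : R) : a <= pos_part b -> pos_part a <= pos_part b.
Proof.
rewrite /pos_part => h; rewrite ge_max h /= le_max lexx orbT //.
Qed.

Lemma le_pos (a : R) : a <= pos_part a.
Proof. by rewrite /pos_part le_max lexx. Qed.

Lemma pos_ge0 (a : R) : 0 <= pos_part a.
Proof. by rewrite /pos_part le_max lexx orbT. Qed.

Lemma pos_le0 (a : R) : pos_part a <= 0 -> a <= 0.
Proof. by move=> h; apply: le_trans (le_pos a) h. Qed.

Lemma pos_of_le0 (a : R) : a <= 0 -> pos_part a = 0.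
Proof. by move=> h; rewrite /pos_part; apply/max_idPr. Qed.

Lemma pos_of_ge0 (a : R) : 0 <= a -> pos_part a = a.
Proof. by move=> h; rewrite /pos_part; apply/max_idPl. Qed.

Lemma Phi_lip m M a b : m <= M -> Phi m M a - Phi m M b <= pos_part (a - b).
Proof.
move=> mM; rewrite /Phi.
have Hp := le_pos (a - b); have H0 := pos_ge0 (a - b).
have [h1|h1] := ltP a m; have [h2|h2] := leP a M;
have [h3|h3] := ltP b m; have [h4|h4] := leP b M; lra.
Qed.

Lemma Phi_ge m M a : m <= M -> a - (M - m) <= Phi m M a.
Proof. move=> mM; rewrite /Phi; have [h1|h1] := ltP a m; have [h2|h2] := leP a M; lra. Qed.

Lemma Phi_bnd m M a : m <= M -> 0 <= m -> 0 <= a <= 1 -> 0 <= Phi m M a <= 1.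
Proof. move=> mM m0 /andP[a0 a1]; rewrite /Phi; have [h1|h1] := ltP a m; have [h2|h2] := leP a M; apply/andP; split; lra. Qed.

Lemma Phi_mid m M a : m <= a -> a <= M -> Phi m M a = m.
Proof. by move=> h1 h2; rewrite /Phi ltNge h1 /= h2. Qed.


Lemma step_bnd g I : bnd g -> itv_nondeg I -> bnd (sd_step g I).
Proof.
move=> bg nI x; rewrite sd_stepE.
have [h0 h1] := bg x.
have /andP[] := Phi_bnd (infI_supI bg nI) (infI_ge0 bg nI) (introT andP (conj h0 h1)).
by move=> -> ->.
Qed.

Lemma step_lip g I a b : bnd g -> itv_nondeg I ->
  pos_part (sd_step g I a - sd_step g I b) <= pos_part (g a - g b).
Proof. by move=> bg nI; apply: pos_le; rewrite !sd_stepE; apply: Phi_lip; apply: infI_supI. Qed.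

Lemma step_ge g I x : bnd g -> itv_nondeg I -> g x - DeltaI I g <= sd_step g I x.
Proof. by move=> bg nI; rewrite sd_stepE; apply: Phi_ge; apply: infI_supI. Qed.

Lemma step_const g I x y : bnd g -> itv_nondeg I -> x \in I -> y \in I ->
  sd_step g I x = sd_step g I y.
Proof.
move=> bg nI xI yI; rewrite !sd_stepE !Phi_mid //;
by [apply: infI_le | apply: supI_ge].
Qed.

Lemma Delta_lip g g' I : bnd g -> itv_nondeg I ->
  (forall a b, pos_part (g' a - g' b) <= pos_part (g a - g b)) ->
  DeltaI I g' <= DeltaI I g.
Proof.
move=> bg nI H.
have key : forall y z, y \in I -> z \in I -> g' y <= g' z + DeltaI I g.
  move=> y z yI zI.
  have h1 := le_pos (g' y - g' z).
  have h2 := H y z.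
  have h3 : pos_part (g y - g z) <= DeltaI I g.
    rewrite /pos_part ge_max; apply/andP; split; rewrite /DeltaI.
      have := supI_ge bg nI yI; have := infI_le bg nI zI; lra.
    have := infI_supI bg nI; lra.
  lra.
have hs : forall z, z \in I -> supI I g' <= g' z + DeltaI I g.
  by move=> z zI; apply: supI_le => // y yI; apply: key.
have hi : supI I g' - DeltaI I g <= infI I g'.
  by apply: infI_ge => // z zI; have := hs z zI; lra.
rewrite {1}/DeltaI; lra.
Qed.

Lemma soft_cons g I J : soft_deform g (I :: J) = soft_deform (sd_step g I) J.
Proof. by []. Qed.

Lemma soft_bnd J g : (forall I, I \in J -> itv_nondeg I) -> bnd g -> bnd (soft_deform g J).
Proof.
elim: J g => [//|I J IH] g HJ bg; rewrite soft_cons; apply: IH.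
  by move=> I' HI'; apply: HJ; rewrite inE HI' orbT.
by apply: step_bnd => //; apply: HJ; rewrite inE eqxx.
Qed.

Lemma soft_lip J g : (forall I, I \in J -> itv_nondeg I) -> bnd g ->
  forall a b, pos_part (soft_deform g J a - soft_deform g J b) <= pos_part (g a - g b).
Proof.
elim: J g => [|I J IH] g HJ bg a b; first exact: lexx.
have nI : itv_nondeg I by apply: HJ; rewrite inE eqxx.
rewrite soft_cons; apply: le_trans (step_lip a b bg nI).
apply: IH; last exact: step_bnd.
by move=> I' HI'; apply: HJ; rewrite inE HI' orbT.
Qed.

Lemma soft_ge J g : (forall I, I \in J -> itv_nondeg I) -> bnd g ->
  forall x, g x - \sum_(I <- J) DeltaI I g <= soft_deform g J x.
Proof.
elim: J g => [|I J IH] g HJ bg x; first by rewrite big_nil subr0.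
have nI : itv_nondeg I by apply: HJ; rewrite inE eqxx.
have HJ' : forall I', I' \in J -> itv_nondeg I' by move=> I' HI'; apply: HJ; rewrite inE HI' orbT.
rewrite soft_cons big_cons.
have := IH _ HJ' (step_bnd bg nI) x.
have := step_ge x bg nI.
have : \sum_(I0 <- J) DeltaI I0 (sd_step g I) <= \sum_(I0 <- J) DeltaI I0 g.
  rewrite !big_seq; apply: ler_sum => I' HI'; apply: Delta_lip => //; first exact: HJ'.
  by move=> a b; apply: step_lip.
lra.
Qed.

Lemma eq_of_lip (u v : R -> R) a b :
  (forall a b, pos_part (u a - u b) <= pos_part (v a - v b)) -> v a = v b -> u a = u b.
Proof.
move=> H e; have h1 := H a b; have h2 := H b a.
have z : pos_part 0 = 0 :> R by rewrite pos_of_le0.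
rewrite e subrr z in h1; rewrite e subrr z in h2.
have := pos_le0 h1; have := pos_le0 h2; lra.
Qed.

Lemma soft_const J g : (forall I, I \in J -> itv_nondeg I) -> bnd g ->
  forall I, I \in J -> forall x y, x \in I -> y \in I -> soft_deform g J x = soft_deform g J y.
Proof.
elim: J g => [//|I0 J IH] g HJ bg I; rewrite inE => /orP[/eqP ->|HI] x y xI yI.
  have nI : itv_nondeg I0 by apply: HJ; rewrite inE eqxx.
  have HJ' : forall I', I' \in J -> itv_nondeg I' by move=> I' HI'; apply: HJ; rewrite inE HI' orbT.
  rewrite soft_cons; apply: (eq_of_lip (v := sd_step g I0)).
    by apply: soft_lip => //; apply: step_bnd.
  exact: step_const.
have nI : itv_nondeg I0 by apply: HJ; rewrite inE eqxx.
have HJ' : forall I', I' \in J -> itv_nondeg I' by move=> I' HI'; apply: HJ; rewrite inE HI' orbT.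
by rewrite soft_cons; apply: (IH _ HJ' (step_bnd bg nI) I).
Qed.

End PartA.
Unset Implicit Arguments.
Section PartB1.
Variable R : realType.
Local Open Scope ereal_scope.

Lemma int_mono (dd : measure_display) (TT : measurableType dd) (mu : {measure set TT -> \bar R}) (f1 f2 : TT -> \bar R) :
  (forall x, f1 x <= f2 x) ->
  \int[mu]_(x in setT) f1 x <= \int[mu]_(x in setT) f2 x.
Proof.
move=> H; rewrite /integral !patch_setT; apply: leeB; apply: ereal_sup_le.
  move=> _ [h hf <-]; exists h => // x; apply: le_trans (hf x) _.
  by apply: (@funepos_le _ _ setT) => [y _|]; [apply: H|rewrite in_setT].
move=> _ [h hf <-]; exists h => // x; apply: le_trans (hf x) _.
by apply: (@funeneg_le _ _ setT) => [y _|]; [apply: H|rewrite in_setT].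
Qed.
End PartB1.

Section Dense.
Variable R : realType.
Lemma dense_rat (f : R -> R) (s q eps : R) :
  {within `[0, +oo[, continuous f} -> 0 <= s -> s <= q -> 0 < eps ->
  exists r : rat, [/\ 0 <= (ratr r : R), ratr r <= q & `|f s - f (ratr r)| < eps].
Proof.
move=> cf s0 sq e0.
have As : `[0, +oo[%classic s by rewrite /= in_itv /= s0.
have := (subspace_continuousP _ _).1 cf s As.
move=> /cvgr_dist_lt /(_ eps e0).
rewrite /within /= => /nbhs_ballP [del /= del0 Hd].
have [->|sp] := eqVneq s 0.
  by exists 0%Q; rewrite rmorph0 lexx (le_trans s0 sq) subrr normr0.
have sgt : 0 < s by rewrite lt_neqAle eq_sym sp s0.
have mlt : Num.max 0 (s - del) < s.
  by rewrite gt_max sgt /=; lra.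
have [r] := rat_in_itvoo mlt; rewrite in_itv /= => /andP[r1 r2].
move: r1; rewrite gt_max => /andP[r0 r1].
exists r; split; [exact: ltW | lra |].
apply: Hd; last by rewrite /= in_itv /= (ltW r0).
by rewrite /ball /= ger0_norm; lra.
Qed.
End Dense.
Section Proc.
Variable R : realType.
Variables (d : measure_display) (T : measurableType d) (V : R -> T -> R).
Hypothesis mV : forall t, measurable_fun setT (V t).
Hypothesis cV : forall w, {within `[0, +oo[, continuous (fun t => V t w)}.

Lemma bigcap_rat (F : rat -> set T) : (forall i, measurable (F i)) -> measurable (\bigcap_i F i).
Proof.
move=> mF; rewrite -[X in measurable X]setCK setC_bigcap; apply: measurableC.
by apply: bigcupT_measurable_rat => i; apply: measurableC.
Qed.

Lemma meas_pre t (A : set R) : measurable A -> measurable [set w | A (V t w)].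
Proof. by move=> mA; have := mV t measurableT A mA; rewrite setTI. Qed.

Lemma S_le c q : measurable [set w | forall s, 0 <= s -> s <= q -> V s w <= c].
Proof.
have -> : [set w | forall s, 0 <= s -> s <= q -> V s w <= c] =
   \bigcap_(r : rat) [set w | (0 <= (ratr r : R)) && (ratr r <= q) -> V (ratr r) w <= c].
  apply/seteqP; split => w /=.
    by move=> H r _ /andP[h1 h2]; apply: H.
  move=> H s s0 sq; rewrite leNgt; apply/negP => hc.
  have e0 : 0 < V s w - c by rewrite subr_gt0.
  have [r [r0 rq hr]] := dense_rat _ _ _ _ _ (cV w) s0 sq e0.
  have := H r Logic.I; rewrite r0 rq => /(_ isT).
  move: hr; rewrite ltr_norml; lra.
apply: bigcap_rat => r /=.
have [h|h] := pselect ((0 <= (ratr r : R)) && (ratr r <= q)).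
  have -> : [set w | (0 <= (ratr r : R)) && (ratr r <= q) -> V (ratr r) w <= c] =
      [set w | [set` `]-oo, c]] (V (ratr r) w)].
    by apply/seteqP; split => w /=; rewrite in_itv /=; [move=> /(_ h) | move=> ->].
  by apply: meas_pre; apply: measurable_itv.
have -> : [set w | (0 <= (ratr r : R)) && (ratr r <= q) -> V (ratr r) w <= c] = setT.
  by apply/seteqP; split => w //= _ h'; exfalso; apply: h.
exact: measurableT.
Qed.

Lemma S_lt b q : 0 <= q -> measurable [set w | forall s, 0 <= s -> s <= q -> V s w < b].
Proof.
move=> q0.
have -> : [set w | forall s, 0 <= s -> s <= q -> V s w < b] =
   \bigcup_(r : rat) [set w | 0 < (ratr r : R) /\ forall s, 0 <= s -> s <= q -> V s w <= b - ratr r].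
  apply/seteqP; split => w /=.
    move=> H.
    have cw : {within `[0, q], continuous (fun t => V t w)}.
      apply: continuous_subspaceW (cV w) => t /=; rewrite !in_itv /= => /andP[-> _] //.
    have [c] := EVT_max q0 cw; rewrite in_itv /= => /andP[c0 cq] Hc.
    have hb : V c w < b := H c c0 cq.
    have hlt : 0 < b - V c w by rewrite subr_gt0.
    have [r] := rat_in_itvoo hlt; rewrite in_itv /= => /andP[r1 r2].
    exists r => //; split => // s s0 sq.
    have := Hc s; rewrite in_itv /= s0 sq => /(_ isT); lra.
  move=> [r _ [r0 H]] s s0 sq; have := H s s0 sq; lra.
apply: bigcupT_measurable_rat => r /=.
have [h|h] := pselect (0 < (ratr r : R)).
  have -> : [set w | 0 < (ratr r : R) /\ forall s, 0 <= s -> s <= q -> V s w <= b - ratr r] =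
      [set w | forall s, 0 <= s -> s <= q -> V s w <= b - ratr r].
    by apply/seteqP; split => w /=; [case | split].
  exact: S_le.
have -> : [set w | 0 < (ratr r : R) /\ forall s, 0 <= s -> s <= q -> V s w <= b - ratr r] = set0.
  by apply/seteqP; split => w //= [h' _]; apply: h.
exact: measurable0.
Qed.

Lemma G_down (L : set R) q : 0 <= q -> L !=set0 ->
  measurable [set w | forall s, 0 <= s -> s <= q -> exists u, L u /\ V s w <= u].
Proof.
move=> q0 Lne.
have [hub|nub] := pselect (has_ubound L); last first.
  have -> : [set w | forall s, 0 <= s -> s <= q -> exists u, L u /\ V s w <= u] = setT.
    apply/seteqP; split => w //= _ s _ _.
    apply: contrapT => hn; apply: nub; exists (V s w) => y Ly.
    rewrite leNgt; apply/negP => hy; apply: hn; exists y; split => //; exact: ltW.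
  exact: measurableT.
have hsup : has_sup L by split.
have ub := sup_upper_bound hsup.
have [Lb|nLb] := pselect (L (sup L)).
  have -> : [set w | forall s, 0 <= s -> s <= q -> exists u, L u /\ V s w <= u] =
     [set w | forall s, 0 <= s -> s <= q -> V s w <= sup L].
    apply/seteqP; split => w /= H s s0 sq.
      by have [u [Lu hu]] := H s s0 sq; apply: le_trans hu (ub u Lu).
    by exists (sup L); split => //; apply: H.
  exact: S_le.
have -> : [set w | forall s, 0 <= s -> s <= q -> exists u, L u /\ V s w <= u] =
   [set w | forall s, 0 <= s -> s <= q -> V s w < sup L].
  apply/seteqP; split => w /= H s s0 sq.
    have [u [Lu hu]] := H s s0 sq; apply: le_lt_trans hu _.
    rewrite lt_neqAle (ub u Lu) andbT; apply/eqP => e; apply: nLb; by rewrite -e.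
  have hs := H s s0 sq.
  have e0 : 0 < sup L - V s w by rewrite subr_gt0.
  have [u Lu hu] := sup_adherent e0 hsup.
  exists u; split => //; apply: ltW; lra.
exact: S_lt.
Qed.

End Proc.

Section Conv.
Variable R : realType.
Variables (d : measure_display) (T : measurableType d) (V : R -> T -> R).
Hypothesis mV : forall t, measurable_fun setT (V t).
Hypothesis cV : forall w, {within `[0, +oo[, continuous (fun t => V t w)}.

Lemma G_conv (L : set R) q : 0 <= q -> L !=set0 ->
  (forall a b v, L a -> L b -> a <= v -> v <= b -> L v) ->
  measurable [set w | forall s, 0 <= s -> s <= q -> L (V s w)].
Proof.
move=> q0 Lne cL.
pose V' := fun t w => - V t w.
have mV' : forall t, measurable_fun setT (V' t) by move=> t; apply: measurable_funN.
have cV' : forall w, {within `[0, +oo[, continuous (fun t => V' t w)}.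
  by move=> w x; apply: continuousN; apply: cV.
have Lne' : [set u | L (- u)] !=set0.
  by case: Lne => u Lu; exists (- u); rewrite /= opprK.
have -> : [set w | forall s, 0 <= s -> s <= q -> L (V s w)] =
  [set w | forall s, 0 <= s -> s <= q -> exists u, L u /\ V s w <= u] `&`
  [set w | forall s, 0 <= s -> s <= q -> exists u, [set u | L (- u)] u /\ V' s w <= u].
  apply/seteqP; split => w /=.
    move=> H; split => s s0 sq.
      by exists (V s w); split => //; apply: H.
    by exists (V' s w); rewrite /V' opprK; split => //; apply: H.
  move=> [H1 H2] s s0 sq.
  have [u1 [Lu1 h1]] := H1 s s0 sq.
  have [u2 [Lu2 h2]] := H2 s s0 sq.
  apply: (cL _ _ _ Lu2 Lu1) => //; rewrite /V' in h2; lra.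
apply: measurableI; first exact: G_down.
exact: (G_down _ _ _ _ mV' cV').
Qed.
End Conv.
Section Ev.
Variable R : realType.
Variables (d : measure_display) (T : measurableType d) (P : probability T R) (W : R -> T -> R).
Hypothesis HW : is_std_BM P W.

Definition Vshape (g : R -> R) := (forall a b, a <= b -> b <= 0 -> g b <= g a) /\
  (forall a b, 0 <= a -> a <= b -> g a <= g b).

Lemma hit_ge0 x y w : (0 <= hit_time W x y w)%E.
Proof. by apply: le_ereal_inf_tmp => _ [t [t0 _] <-]; rewrite lee_fin. Qed.

Lemma ev_char (g : R -> R) x w :
  (forall y, ((g y - g x)%:E <= hit_time W x y w)%E) <->
  (forall t, 0 <= t -> g (x + W t w) - g x <= t).
Proof.
split.
  move=> H t t0; have := H (x + W t w).
  have : (hit_time W x (x + W t w) w <= t%:E)%E.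
    by apply: ereal_inf_lbound; exists t.
  move=> h1 h2; have := le_trans h2 h1; by rewrite lee_fin.
move=> H y; apply: le_ereal_inf_tmp => _ [t [t0 ht] <-].
by rewrite lee_fin -ht; apply: H.
Qed.

Lemma ev_meas (g : R -> R) x : Vshape g ->
  measurable [set w | forall y, ((g y - g x)%:E <= hit_time W x y w)%E].
Proof.
case: HW => mW _ cW _ _ [Vl Vr].
have -> : [set w | forall y, ((g y - g x)%:E <= hit_time W x y w)%E] =
  \bigcap_(q : rat) [set w | 0 <= (ratr q : R) -> forall s, 0 <= s -> s <= ratr q ->
                    [set v | g (x + v) <= g x + ratr q] (W s w)].
  apply/seteqP; split => w /=.
    by move/ev_char => H q _ q0 s s0 sq /=; have := H s s0; lra.
  move=> H; apply/ev_char => t t0; rewrite leNgt; apply/negP => hc.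
  have [q] := rat_in_itvoo hc; rewrite in_itv /= => /andP[q1 q2].
  have := H q Logic.I (le_trans t0 (ltW q1)) t t0 (ltW q1) => /=; lra.
apply: bigcap_rat => q /=.
have [q0|q0] := pselect (0 <= (ratr q : R)).
  have -> : [set w | 0 <= (ratr q : R) -> forall s, 0 <= s -> s <= ratr q ->
                    [set v | g (x + v) <= g x + ratr q] (W s w)] =
    [set w | forall s, 0 <= s -> s <= ratr q -> [set v | g (x + v) <= g x + ratr q] (W s w)].
    by apply/seteqP; split => w /=; [move=> /(_ q0) | move=> H _].
  apply: G_conv => //.
  - by exists 0; rewrite /= addr0 lerDl.
  - move=> a b v /= ha hb av vb.
    have [h|h] := leP (x + v) 0.
      by apply: le_trans ha; apply: Vl => //; rewrite lerD2l.
    by apply: le_trans hb; apply: Vr; [exact: ltW | rewrite lerD2l].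
have -> : [set w | 0 <= (ratr q : R) -> forall s, 0 <= s -> s <= ratr q ->
                    [set v | g (x + v) <= g x + ratr q] (W s w)] = setT.
  by apply/seteqP; split => w //= _ h; exfalso; apply: q0.
exact: measurableT.
Qed.

Lemma energy_le (g1 g2 : R -> R) : Vshape g1 -> Vshape g2 ->
  (forall a b, pos_part (g2 a - g2 b) <= pos_part (g1 a - g1 b)) ->
  (energy P W g2 <= energy P W g1)%E.
Proof.
move=> V1 V2 H; apply: int_mono => x.
rewrite /bm_event_prob leeN2.
have sub : [set w | forall y, ((g1 y - g1 x)%:E <= hit_time W x y w)%E] `<=`
           [set w | forall y, ((g2 y - g2 x)%:E <= hit_time W x y w)%E].
  move=> w /= Hw y.
  have h := le_trans (le_pos (g2 y - g2 x)) (H y x).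
  have [h1|h1] := leP (g1 y - g1 x) 0.
    rewrite pos_of_le0 // in h; apply: le_trans (hit_ge0 x y w); by rewrite lee_fin.
  rewrite pos_of_ge0 in h; last exact: ltW.
  by apply: le_trans (Hw y); rewrite lee_fin.
rewrite lee_lne ?in_itv /= ?measure_ge0 ?leey //.
apply: le_measure => //; rewrite inE; exact: ev_meas.
Qed.
End Ev.

Theorem lemma6p2 (R : realType) (f : R -> R) (J : seq (interval R)) :
  inC1 f ->
  (forall I, I \in J -> itv_nondeg I) ->
  (forall i j, (i < size J)%N -> (j < size J)%N -> i <> j ->
     forall x, ~ (x \in nth `]0, 0[ J i /\ x \in nth `]0, 0[ J j)) ->
  [/\ (* (i) *)
      (forall I, I \in J -> forall x y, x \in I -> y \in I ->
         soft_deform f J x = soft_deform f J y),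
      (* (ii) *)
      (forall x, f x - \sum_(I <- J) DeltaI I f <= soft_deform f J x),
      (forall x y, pos_part (soft_deform f J x - soft_deform f J y)
                   <= pos_part (f x - f y)) &
      (* consequence: E(f^{sd,J}) <= E(f), for the law of Brownian motion,
         realized by any standard Brownian motion W on any probability space *)
      (forall (d : measure_display) (T : measurableType d)
              (P : probability T R) (W : R -> T -> R),
         is_std_BM P W -> (energy P W (soft_deform f J) <= energy P W f)%E)].
Proof.
move=> [f0 fl fr _ [f1 _]] HJ _.
have bf : bnd f by move=> x; split.
have lip := soft_lip HJ bf.
split.
- exact: soft_const.
- exact: soft_ge.
- exact: lip.
move=> d T P W HW.
have Vf : Vshape R f by split.
apply: (@energy_le R d T P W HW f (soft_deform f J) Vf) => //.
split => a b h1 h2.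
  have := lip b a; rewrite (pos_of_le0 (a := f b - f a)); last by rewrite subr_le0; apply: fl.
  by move/pos_le0; rewrite subr_le0.
have := lip a b; rewrite (pos_of_le0 (a := f a - f b)); last by rewrite subr_le0; apply: fr.
by move/pos_le0; rewrite subr_le0.
Qed.
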